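(* Let $\gamma>0$, let $S=(S_1,\ldots,S_n)$ be nonnegative (positive semi-definite) nonzero symmetric $p\times p$ matrices, and let $f:\mathcal D_n^+\to\mathcal D_n^+$ be a stable mapping with Lipschitz parameter $\lambda_f$ for $d_s$ (i.e. $d_s(f(\Delta),f(\Delta'))\le\lambda_f d_s(\Delta,\Delta')$ for all $\Delta,\Delta'$). If $f$ is bounded from above (there is $f_0$ with $f(\Delta)\le f_0$ for all $\Delta$) or $\lambda_f<1$, then the equation $\Delta=I^S(f(\Delta))$ admits a unique solution $\Delta\in\mathcal D_n^+$.
   Context: $\mathcal D_n^+$ is the set of $n\times n$ diagonal matrices with positive diagonal entries; $d_s(\Delta,\Delta')=\max_i\frac{|\Delta_i-\Delta'_i|}{\sqrt{\Delta_i\Delta'_i}}$; $f$ is stable if it is $1$-Lipschitz for $d_s$. For $\Delta\in\mathcal D_n^+$, $Q_\gamma(S,\Delta)=\big(\frac1n\sum_{i=1}^n\Delta_iS_i+\gamma I_p\big)^{-1}$ and $I^S(\Delta)=\mathrm{diag}\big(\frac1n\operatorname{tr}(S_iQ_\gamma(S,\Delta))\big)_{1\le i\le n}$. *)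

(* Defs.v *)
From HB Require Import structures.
From mathcomp Require Import all_boot all_order all_algebra.
From mathcomp Require Import reals.
Set Implicit Arguments. Unset Strict Implicit. Unset Printing Implicit Defensive.
Import Order.TTheory GRing.Theory Num.Theory.
Local Open Scope ring_scope.

Section Defs.
Variable R : realType.

Definition Dpos n (D : 'M[R]_n) : bool :=
  is_diag_mx D && [forall i, 0 < D i i].

Definition ds n (D D' : 'M[R]_n) : R :=
  \big[Num.max/0]_(i < n) (`|D i i - D' i i| / Num.sqrt (D i i * D' i i)).

Definition psd p (A : 'M[R]_p) : Prop :=
  forall x : 'cV[R]_p, 0 <= (x^T *m A *m x) 0 0.

Definition Qg n p (gamma : R) (S : 'I_n -> 'M[R]_p) (D : 'M[R]_n) : 'M[R]_p :=
  invmx ((n%:R)^-1 *: (\sum_(i < n) D i i *: S i) + gamma%:M).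

Definition IS n p (gamma : R) (S : 'I_n -> 'M[R]_p) (D : 'M[R]_n) : 'M[R]_n :=
  diag_mx (\row_(i < n) ((n%:R)^-1 * \tr (S i *m Qg gamma S D))).
End Defs.

(* Main.v *)
Require Import Defs.
From HB Require Import structures.
From mathcomp Require Import all_boot all_order all_algebra.
From mathcomp Require Import reals.
From mathcomp Require Import classical_sets sequences exp.
From mathcomp Require Import ring lra.
Import Order.TTheory GRing.Theory Num.Theory.
Local Open Scope ring_scope.
Set Implicit Arguments. Unset Strict Implicit. Unset Printing Implicit Defensive.

Section Scalar.
Variable R : realType.

Definition rho (x y : R) := `|x - y| / Num.sqrt (x * y).

Lemma rho_ge0 x y : 0 <= rho x y.
Proof. by rewrite /rho divr_ge0 // sqrtr_ge0. Qed.

Lemma rho_sym x y : rho x y = rho y x.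
Proof. by rewrite /rho distrC (mulrC x y). Qed.

Lemma rho_le x y d : 0 < x -> 0 < y -> rho x y <= d ->
  `|x - y| <= d * Num.sqrt (x * y).
Proof.
move=> x0 y0; rewrite /rho ler_pdivrMr ?sqrtr_gt0 ?mulr_gt0 //.
Qed.

Lemma rho_leP x y d : 0 < x -> 0 < y ->
  `|x - y| <= d * Num.sqrt (x * y) -> rho x y <= d.
Proof.
move=> x0 y0 h; rewrite /rho ler_pdivrMr ?sqrtr_gt0 ?mulr_gt0 //.
Qed.

Lemma rho_ratio x y d : 0 < x -> 0 < y -> rho x y <= d ->
  x <= (1 + d) ^+ 2 * y.
Proof.
move=> x0 y0 /rho_le-/(_ x0 y0) h.
have d0 : 0 <= d.
  have : 0 <= d * Num.sqrt (x * y) by apply: le_trans h.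
  by rewrite pmulr_lge0 // sqrtr_gt0 mulr_gt0.
set s := Num.sqrt x; set t := Num.sqrt y.
have s0 : 0 < s by rewrite sqrtr_gt0.
have t0 : 0 < t by rewrite sqrtr_gt0.
have xs : x = s ^+ 2 by rewrite sqr_sqrtr // ltW.
have yt : y = t ^+ 2 by rewrite sqr_sqrtr // ltW.
move: h; rewrite sqrtrM ?(ltW x0) // -/s -/t xs yt => h.
have h1 : s ^+ 2 - t ^+ 2 <= d * (s * t) by apply: le_trans h; exact: ler_norm.
have : s <= (1 + d) * t.
  rewrite leNgt; apply/negP => hlt.
  have : 0 < (s - (1 + d) * t) * (s + t) by rewrite mulr_gt0 // ?subr_gt0 // addr_gt0.
  nra.
move=> hs; rewrite -exprMn.
by rewrite ler_pXn2r // ?nnegrE ?(ltW s0) // mulr_ge0 // ?(ltW t0) // addr_ge0.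
Qed.

Lemma sq1D_le_expR (d : R) : 0 <= d -> (1 + d) ^+ 2 <= expR (2 * d).
Proof.
move=> d0; rewrite mulr2n mulrDl mul1r expRD expr2.
by apply: ler_pM; [lra|lra|exact: expR_ge1Dx|exact: expR_ge1Dx].
Qed.


Lemma bernoulli (h : R) k : 0 <= h -> 1 + k%:R * h <= (1 + h) ^+ k.
Proof.
move=> h0; elim: k => [|k IH]; first by rewrite mul0r addr0 expr0.
rewrite exprSr -natr1.
have : 0 <= k%:R * h * h by rewrite !mulr_ge0.
have : 0 <= (k%:R : R) by [].
nra.
Qed.

Lemma geo_small (E e mu : R) : 0 <= mu -> mu < 1 -> 0 < e ->
  exists k : nat, E * mu ^+ k < e.
Proof.
move=> mu0 mu1 e0.
case: (lerP E 0) => E0; first by exists 0%N; rewrite expr0 mulr1; exact: le_lt_trans E0 e0.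
case: (eqVneq mu 0) => [->|mun0]; first by exists 1%N; rewrite expr1 mulr0.
have mup : 0 < mu by rewrite lt_def mun0.
set h := mu^-1 - 1.
have h0 : 0 < h by rewrite /h subr_gt0 invf_gt1.
have eh : 0 < e * h by rewrite mulr_gt0.
have Eb : 0 <= E / (e * h) by rewrite divr_ge0 // ltW.
have := archi_boundP Eb; set k := Num.bound _ => hk.
exists k.
have muk : 0 < mu ^+ k by rewrite exprn_gt0.
rewrite -ltr_pdivlMr // -exprVn.
have -> : mu^-1 = 1 + h by rewrite /h addrC subrK.
apply: lt_le_trans (ler_wpM2l (ltW e0) (bernoulli k (ltW h0))).
move: hk; rewrite ltr_pdivrMr // => hk.
have : 0 < e by [].
nra.
Qed.

Lemma le_geo (x y E mu : R) : 0 <= mu -> mu < 1 ->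
  (forall k, x <= y + E * mu ^+ k) -> x <= y.
Proof.
move=> mu0 mu1 h; rewrite leNgt; apply/negP => xy.
have xy0 : 0 < x - y by rewrite subr_gt0.
have [k hk] := geo_small E mu0 mu1 xy0.
have := h k; lra.
Qed.


Lemma sqrt_le_bound (x y H : R) : 0 <= x -> 0 <= y -> x <= H -> y <= H ->
  Num.sqrt (x * y) <= H.
Proof.
move=> x0 y0 xH yH.
have H0 : 0 <= H by apply: le_trans xH.
rewrite -(ger0_norm H0) -sqrtr_sqr.
by rewrite ler_sqrt ?expr2 ?mulr_ge0 // ler_pM.
Qed.

Lemma seq_conv (a : nat -> R) (C mu : R) : 0 <= C -> 0 <= mu -> mu < 1 ->
  (forall k, 0 < a k) -> (forall k, rho (a k.+1) (a k) <= C * mu ^+ k) ->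
  exists L H E a', [/\ 0 < L, 0 <= E, forall k, L <= a k /\ a k <= H,
     L <= a' & forall k, `|a k - a'| <= E * mu ^+ k].
Proof.
move=> C0 mu0 mu1 apos hrho.
have omu : 0 < 1 - mu by rewrite subr_gt0.
pose g k := 2 * C * (1 - mu ^+ k) / (1 - mu).
have gS k : g k.+1 = g k + 2 * (C * mu ^+ k).
  by rewrite /g exprS; field; rewrite gt_eqF.
have g0 k : 0 <= g k.
  rewrite /g divr_ge0 ?(ltW omu) // mulr_ge0 ?mulr_ge0 // subr_ge0.
  by apply: exprn_ile1 => //; apply: ltW.
set G := 2 * C / (1 - mu).
have gG k : g k <= G.
  rewrite /g /G ler_pM2r ?invr_gt0 // ler_piMr ?mulr_ge0 //.
  by rewrite lerBlDr lerDl exprn_ge0.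
have dk k : 0 <= C * mu ^+ k by rewrite mulr_ge0 ?exprn_ge0.
have up k : a k <= a 0%N * expR (g k).
  elim: k => [|k IH]; first by rewrite /g expr0 subrr mulr0 mul0r expR0 mulr1.
  apply: le_trans (rho_ratio (apos _) (apos _) (hrho k)) _.
  rewrite gS expRD mulrA mulrC.
  apply: ler_pM => //; [exact: ltW | exact: sqr_ge0 | exact: sq1D_le_expR].
have lo k : a 0%N * expR (- g k) <= a k.
  elim: k => [|k IH]; first by rewrite /g expr0 subrr mulr0 mul0r oppr0 expR0 mulr1.
  have hk2 : rho (a k) (a k.+1) <= C * mu ^+ k by rewrite rho_sym.
  have h1 := rho_ratio (apos _) (apos _) hk2.
  have h2 : a k * expR (- (2 * (C * mu ^+ k))) <= a k.+1.
    have e0 := expR_gt0 (2 * (C * mu ^+ k)).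
    rewrite expRN ler_pdivrMr //.
    apply: le_trans h1 _; rewrite mulrC ler_pM2l ?apos //.
    exact: sq1D_le_expR.
  apply: le_trans h2; rewrite gS opprD expRD mulrA.
  rewrite ler_pM2r ?expR_gt0 //.
set H := a 0%N * expR G.
set L := a 0%N * expR (- G).
have a00 := apos 0%N.
have aH k : a k <= H.
  by apply: le_trans (up k) _; rewrite ler_pM2l // ler_expR.
have La k : L <= a k.
  by apply: le_trans (lo k); rewrite ler_pM2l // ler_expR lerN2.
have L0 : 0 < L by rewrite mulr_gt0 ?expR_gt0.
set B := C * H.
have H0 : 0 <= H by apply: le_trans (aH 0%N); apply: ltW.
have step k : `|a k.+1 - a k| <= B * mu ^+ k.
  apply: le_trans (rho_le (apos _) (apos _) (hrho k)) _.
  rewrite /B mulrAC ler_wpM2r ?exprn_ge0 // ler_wpM2l //.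
  apply: sqrt_le_bound; try exact: ltW; exact: aH.
set E := B / (1 - mu).
have E0 : 0 <= E by apply: divr_ge0; [exact: mulr_ge0 | exact: ltW].
pose b k := a k - E * mu ^+ k.
pose c k := a k + E * mu ^+ k.
have Eg k : E * mu ^+ k - E * mu ^+ k.+1 = B * mu ^+ k.
  by rewrite /E exprS; field; rewrite gt_eqF.
have bS k : b k <= b k.+1.
  rewrite /b; have := step k; rewrite ler_norml => /andP[h _].
  have := Eg k; lra.
have cS k : c k.+1 <= c k.
  rewrite /c; have := step k; rewrite ler_norml => /andP[_ h].
  have := Eg k; lra.
have bmono : {homo b : i j / (i <= j)%N >-> i <= j}.
  by apply: homo_leq; [exact: lexx| move=> ? ? ?; exact: le_trans| exact: bS].
have cmono : {homo c : i j / (i <= j)%N >-> j <= i}.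
  by apply: (@homo_leq _ c (fun x y => y <= x)); [exact: lexx| move=> ? ? ? h1 h2; exact: le_trans h2 h1| exact: cS].
have bc k : b k <= c k by rewrite /b /c; have := exprn_ge0 k mu0; have := E0; nra.
have bcjk j k : b j <= c k.
  case: (leqP j k) => jk.
    exact: le_trans (bmono _ _ jk) (bc k).
  exact: le_trans (bc j) (cmono _ _ (ltnW jk)).
set S : set R := fun x => exists k, x = b k.
have hs : has_sup S.
  split; first by exists (b 0%N); exists 0%N.
  by exists (c 0%N) => x [k ->]; apply: bcjk.
set a' := sup S.
have ba k : b k <= a' by apply: sup_upper_bound => //; exists k.
have ac k : a' <= c k.
  by apply: ge_sup; [exists (b 0%N); exists 0%N | move=> x [j ->]; apply: bcjk].
have dist k : `|a k - a'| <= E * mu ^+ k.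
  by rewrite ler_norml; have := ba k; have := ac k; rewrite /b /c; lra.
exists L, H, E, a'; split => //.
apply: (@le_geo _ _ E mu) => // k.
have := ba k; have := La k; rewrite /b; lra.
Qed.

End Scalar.

Section Gen.
Variable R : realType.

Lemma DposP n (D : 'M[R]_n) : Dpos D -> is_diag_mx D /\ forall i, 0 < D i i.
Proof. by case/andP => h /forallP. Qed.

Lemma Dpos_diag n (v : 'I_n -> R) : (forall i, 0 < v i) -> Dpos (diag_mx (\row_i v i)).
Proof.
move=> h; apply/andP; split; first exact: diag_mx_is_diag.
by apply/forallP => i; rewrite !mxE eqxx mulr1n.
Qed.

Lemma diag_eq n (A B : 'M[R]_n) : is_diag_mx A -> is_diag_mx B ->
  (forall i, A i i = B i i) -> A = B.
Proof.
move=> /is_diag_mxP hA /is_diag_mxP hB h; apply/matrixP => i j.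
case: (eqVneq i j) => [->|ij]; first exact: h.
by rewrite hA ?hB.
Qed.

Lemma dsE n (D D' : 'M[R]_n) : ds D D' = \big[Num.max/0]_(i < n) rho (D i i) (D' i i).
Proof. by []. Qed.

Lemma ds_ge0 n (D D' : 'M[R]_n) : 0 <= ds D D'.
Proof.
rewrite dsE; elim/big_ind: _ => //.
- by move=> x y hx hy; rewrite le_max hx.
- by move=> i _; exact: rho_ge0.
Qed.

Lemma ds_ge n (D D' : 'M[R]_n) i : rho (D i i) (D' i i) <= ds D D'.
Proof. by rewrite dsE; apply: le_bigmax. Qed.

Lemma ds_le n (D D' : 'M[R]_n) x : 0 <= x -> (forall i, rho (D i i) (D' i i) <= x) ->
  ds D D' <= x.
Proof. by move=> x0 h; rewrite dsE; apply: bigmax_le. Qed.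

Lemma fixpoint_unique n (F : 'M[R]_n -> 'M[R]_n) (mu : R) :
  0 <= mu -> mu < 1 ->
  (forall D, Dpos D -> Dpos (F D)) ->
  (forall D D', Dpos D -> Dpos D' -> ds (F D) (F D') <= mu * ds D D') ->
  exists! D, Dpos D /\ D = F D.
Proof.
move=> mu0 mu1 FD Fc.
pose D0 : 'M[R]_n := diag_mx (\row_i (1 : R)).
have D0p : Dpos D0 by apply: Dpos_diag => i; exact: ltr01.
pose X k := iter k F D0.
have Xp k : Dpos (X k) by elim: k => //= k IH; exact: FD.
set C := ds (X 1%N) (X 0%N).
have C0 : 0 <= C by exact: ds_ge0.
have dX k : ds (X k.+1) (X k) <= C * mu ^+ k.
  elim: k => [|k IH]; first by rewrite expr0 mulr1.
  apply: le_trans (Fc _ _ (Xp k.+1) (Xp k)) _.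
  by rewrite exprS mulrCA ler_wpM2l.
have hseq i : exists q : R * R * R * R,
   let: (L, H, E, a') := q in
   [/\ 0 < L, 0 <= E, forall k, L <= X k i i /\ X k i i <= H,
     L <= a' & forall k, `|X k i i - a'| <= E * mu ^+ k].
  have [||L [H [E [a' [h1 h2 h3 h4 h5]]]]] := @seq_conv R (fun k => X k i i) C mu C0 mu0 mu1.
  - by move=> k; have [_] := DposP (Xp k); apply.
  - by move=> k; apply: le_trans (ds_ge _ _ i) (dX k).
  by exists (L, H, E, a').
have [q hq] := fin_all_exists hseq.
pose L i := (q i).1.1.1. pose H i := (q i).1.1.2.
pose E i := (q i).1.2. pose a' i := (q i).2.
have hq' i : [/\ 0 < L i, 0 <= E i, forall k, L i <= X k i i /\ X k i i <= H i,
     L i <= a' i & forall k, `|X k i i - a' i| <= E i * mu ^+ k].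
  by have := hq i; rewrite /L /H /E /a'; case: (q i) => [[[? ?] ?] ?].
have Lp i : 0 < L i by case: (hq' i).
have a'p i : 0 < a' i by case: (hq' i) => h _ _ h4 _; exact: lt_le_trans h h4.
pose Ds := diag_mx (\row_i a' i).
have Dsp : Dpos Ds by exact: Dpos_diag.
have Dsii i : Ds i i = a' i by rewrite !mxE eqxx mulr1n.
pose E' := \sum_i E i / L i.
have E'0 : 0 <= E'.
  apply: sumr_ge0 => i _; apply: divr_ge0; [by case: (hq' i) | exact: ltW].
have dDs k : ds Ds (X k) <= E' * mu ^+ k.
  apply: ds_le; first by rewrite mulr_ge0 ?exprn_ge0.
  move=> i; rewrite Dsii.
  have [h1 h2 h3 h4 h5] := hq' i.
  have Xk := (proj2 (DposP (Xp k))) i.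
  apply: rho_leP => //.
  rewrite distrC.
  apply: le_trans (h5 k) _.
  have sL : L i <= Num.sqrt (a' i * X k i i).
    rewrite -(ger0_norm (ltW h1)) -sqrtr_sqr expr2 ler_sqrt ?mulr_ge0 ?(ltW (a'p i)) ?(ltW Xk) //.
    by apply: ler_pM => //; try exact: ltW; case: (h3 k).
  have EL : E i / L i <= E'.
    rewrite /E' (bigD1 i) //= lerDl; apply: sumr_ge0 => j _.
    by apply: divr_ge0; [case: (hq' j) | exact: ltW].
  have : E i <= E' * L i by rewrite -ler_pdivrMr.
  move=> h; rewrite mulrAC ler_wpM2r ?exprn_ge0 //.
  by apply: le_trans h _; rewrite ler_wpM2l.
have Yp := FD _ Dsp.
have [Ydiag Ypos] := DposP Yp.
have fix1 : F Ds = Ds.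
  apply: diag_eq => //; first exact: diag_mx_is_diag.
  move=> i; rewrite Dsii.
  have [h1 h2 h3 h4 h5] := hq' i.
  set c := F Ds i i.
  have c0 : 0 < c := Ypos i.
  have hk k : `|c - a' i| <= (E' * Num.sqrt (c * H i) + E i) * mu ^+ k.
    have r1 : rho c (X k.+1 i i) <= E' * mu ^+ k.
      apply: le_trans (ds_ge _ _ i) _.
      apply: le_trans (Fc _ _ Dsp (Xp k)) _.
      apply: le_trans (ler_wpM2l mu0 (dDs k)) _.
      by apply: ler_piMl; [rewrite mulr_ge0 ?exprn_ge0 | exact: ltW].
    have Xk := (proj2 (DposP (Xp k.+1))) i.
    have r2 := rho_le c0 Xk r1.
    have sq : Num.sqrt (c * X k.+1 i i) <= Num.sqrt (c * H i).
      have [_ hH] := h3 k.+1.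
      have Hi0 : 0 <= H i by apply: le_trans hH; exact: ltW.
      rewrite ler_sqrt; last by rewrite mulr_ge0 // ltW.
      by rewrite ler_pM2l.
    have r3 : `|c - X k.+1 i i| <= E' * Num.sqrt (c * H i) * mu ^+ k.
      apply: le_trans r2 _; rewrite mulrAC ler_wpM2r ?exprn_ge0 //.
      by rewrite ler_wpM2l.
    have r4 : `|X k.+1 i i - a' i| <= E i * mu ^+ k.
      apply: le_trans (h5 k.+1) _; rewrite exprS mulrCA.
      by apply: ler_piMl; [rewrite mulr_ge0 ?exprn_ge0 | exact: ltW].
    have e : c - a' i = (c - X k.+1 i i) + (X k.+1 i i - a' i) by rewrite addrA subrK.
    rewrite e mulrDl; apply: le_trans (ler_normD _ _) _; exact: lerD r3 r4.
  set K := E' * Num.sqrt (c * H i) + E i.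
  apply/le_anti/andP; split.
    apply: (@le_geo _ _ _ K mu) => // k; have := hk k; rewrite ler_norml => /andP[_ h].
    by rewrite -lerBlDl.
  apply: (@le_geo _ _ _ K mu) => // k; have := hk k; rewrite ler_norml => /andP[h _].
  by rewrite -lerBlDl -opprB lerNl.
exists Ds; split; first by split.
move=> D' [D'p D'e].
have dd : ds Ds D' <= 0.
  have h := Fc _ _ Dsp D'p; rewrite fix1 -D'e in h.
  have := ds_ge0 Ds D'; nra.
have [D'd D'pos] := DposP D'p.
apply: diag_eq => //; first exact: diag_mx_is_diag.
move=> i.
have := le_trans (ds_ge _ _ i) dd.
move=> /(rho_le (proj2 (DposP Dsp) i) (D'pos i)); rewrite mul0r normr_le0 subr_eq0.
by move/eqP.
Qed.

End Gen.

Section Mat.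
Variable R : realType.

Definition bf p (A : 'M[R]_p) (x y : 'cV[R]_p) : R := (x^T *m A *m y) 0 0.

Lemma psd_bf p (A : 'M[R]_p) : psd A <-> forall x, 0 <= bf A x x.
Proof. by []. Qed.

Lemma bfDm p (A B : 'M[R]_p) x y : bf (A + B) x y = bf A x y + bf B x y.
Proof. by rewrite /bf mulmxDr mulmxDl mxE. Qed.

Lemma bfZm p (c : R) (A : 'M[R]_p) x y : bf (c *: A) x y = c * bf A x y.
Proof. by rewrite /bf -scalemxAr -scalemxAl mxE. Qed.

Lemma bfNm p (A : 'M[R]_p) x y : bf (- A) x y = - bf A x y.
Proof. by rewrite -scaleN1r bfZm mulN1r. Qed.

Lemma bfBm p (A B : 'M[R]_p) x y : bf (A - B) x y = bf A x y - bf B x y.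
Proof. by rewrite bfDm bfNm. Qed.

Lemma bf0m p (x y : 'cV[R]_p) : bf 0 x y = 0.
Proof. by rewrite /bf mulmx0 mul0mx mxE. Qed.

Lemma bf_summ p n (F : 'I_n -> 'M[R]_p) x y :
  bf (\sum_i F i) x y = \sum_i bf (F i) x y.
Proof.
elim/big_rec2: _ => [|i a B _ <-]; first exact: bf0m.
by rewrite bfDm.
Qed.

Lemma bfDl p (A : 'M[R]_p) x1 x2 y : bf A (x1 + x2) y = bf A x1 y + bf A x2 y.
Proof. by rewrite /bf linearD /= !mulmxDl mxE. Qed.

Lemma bfZl p (A : 'M[R]_p) c x y : bf A (c *: x) y = c * bf A x y.
Proof. by rewrite /bf linearZ /= -!scalemxAl mxE. Qed.

Lemma bfDr p (A : 'M[R]_p) x y1 y2 : bf A x (y1 + y2) = bf A x y1 + bf A x y2.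
Proof. by rewrite /bf mulmxDr mxE. Qed.

Lemma bfZr p (A : 'M[R]_p) c x y : bf A x (c *: y) = c * bf A x y.
Proof. by rewrite /bf -scalemxAr mxE. Qed.

Lemma bf_sym p (A : 'M[R]_p) x y : A^T = A -> bf A x y = bf A y x.
Proof.
move=> sA; have e (M : 'M[R]_1) : M 0 0 = M^T 0 0 by rewrite mxE.
by rewrite /bf e !trmx_mul trmxK sA mulmxA.
Qed.

Lemma bf_delta p (A : 'M[R]_p) i j : bf A (delta_mx i 0) (delta_mx j 0) = A i j.
Proof. by rewrite /bf trmx_delta -rowE -colE !mxE. Qed.

Lemma bf_quad p (A : 'M[R]_p) x y t : A^T = A ->
  bf A (x + t *: y) (x + t *: y) = bf A x x + 2 * t * bf A x y + t ^+ 2 * bf A y y.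
Proof.
move=> sA; rewrite !bfDl !bfDr !bfZl !bfZr (bf_sym x y sA); ring.
Qed.

Lemma cs_quad (g h g' : R) : 0 <= g' -> (forall t, 0 <= g + 2 * t * h + t ^+ 2 * g') ->
  h ^+ 2 <= g * g'.
Proof.
move=> g'0 H.
case: (eqVneq g' 0) => [g'e|g'n].
  rewrite g'e mulr0; case: (eqVneq h 0) => [->|hn]; first by rewrite expr0n.
  have := H (- (g + 1) / (2 * h)); rewrite g'e mulr0 addr0.
  have -> : 2 * (- (g + 1) / (2 * h)) * h = - (g + 1).
    by field.
  lra.
have g'p : 0 < g' by rewrite lt_def g'n.
have := H (- h / g').
have -> : g + 2 * (- h / g') * h + (- h / g') ^+ 2 * g' = g - h ^+ 2 / g' by field.
by rewrite subr_ge0 ler_pdivrMr.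
Qed.

Lemma cs_bf p (A : 'M[R]_p) x y : A^T = A -> psd A ->
  bf A x y ^+ 2 <= bf A x x * bf A y y.
Proof.
move=> sA pA; apply: cs_quad; first exact: pA.
by move=> t; rewrite -bf_quad //; apply: pA.
Qed.

Lemma sq_le0 (h : R) : h ^+ 2 <= 0 -> h = 0.
Proof. by move=> h0; apply/eqP; rewrite -sqrf_eq0 eq_le h0 sqr_ge0. Qed.

Lemma tr1 (M : 'M[R]_1) : \tr M = M 0 0.
Proof. by rewrite /mxtrace big_ord1. Qed.

Lemma mul11 (u : 'M[R]_1) (v : 'M[R]_1) : (u *m v) 0 0 = u 0 0 * v 0 0.
Proof. by rewrite mxE big_ord1. Qed.

Lemma bf_rank1 p (B : 'M[R]_p) (a x : 'cV[R]_p) :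
  bf (a *m a^T) x x = ((x^T *m a) 0 0) ^+ 2.
Proof.
rewrite /bf mulmxA -mulmxA mul11 expr2; congr (_ * _).
by rewrite -[(a^T *m x)]trmxK trmx_mul trmxK mxE.
Qed.

Lemma tr_rank1 p (a : 'cV[R]_p) (P : 'M[R]_p) : \tr (a *m a^T *m P) = bf P a a.
Proof. by rewrite -mulmxA mxtrace_mulC tr1 /bf. Qed.

Lemma tr_psd p (A P : 'M[R]_p) : A^T = A -> psd A -> psd P -> 0 <= \tr (A *m P).
Proof.
move=> sA pA pP.
suff H : forall m (B : 'M[R]_p), B^T = B -> psd B ->
    (forall i j : 'I_p, (m <= i)%N -> B i j = 0) -> 0 <= \tr (B *m P).
  by apply: (H p) => // i j; rewrite leqNgt ltn_ord.
elim=> [|m IH] B sB pB zB.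
  have -> : B = 0 by apply/matrixP => i j; rewrite mxE zB.
  by rewrite mul0mx linear0.
case: (leqP p m) => pm.
  apply: IH => // i j mi; exfalso.
  by have := ltn_ord i; rewrite ltnNge (leq_trans pm mi).
set k := Ordinal pm.
set e : 'cV[R]_p := delta_mx k 0.
set al := B k k.
have Bsym i j : B i j = B j i by rewrite -[in LHS]sB mxE.
have eal : bf B e e = al by rewrite bf_delta.
have al0 : 0 <= al by rewrite -eal; apply: pB.
case: (eqVneq al 0) => [al_0 | aln].
  have colz i : B i k = 0.
    apply: sq_le0; have := cs_bf (delta_mx i 0) e sB pB.
    by rewrite !bf_delta -/al al_0 mulr0.
  apply: IH => // i j; rewrite leq_eqVlt => /orP[/eqP mi|mi]; last exact: zB.
  have -> : i = k by apply: val_inj; rewrite /= mi.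
  by rewrite Bsym colz.
have alp : 0 < al by rewrite lt_def aln.
set a : 'cV[R]_p := col k B.
have ai i : a i 0 = B i k by rewrite mxE.
set B' := B - al^-1 *: (a *m a^T).
have sB' : B'^T = B' by rewrite /B' linearB linearZ /= trmx_mul trmxK sB.
have hxa x : (x^T *m a) 0 0 = bf B x e by rewrite /bf /a colE mulmxA.
have pB' : psd B'.
  move=> x; rewrite -/(bf B' x x) bfBm bfZm bf_rank1 // hxa.
  have := cs_bf x e sB pB; rewrite eal => h.
  rewrite subr_ge0 mulrC ler_pdivrMr // mulrC //.
have zB' (i j : 'I_p) : (m <= i)%N -> B' i j = 0.
  rewrite /B' !mxE big_ord1 !mxE.
  rewrite leq_eqVlt => /orP[/eqP mi|mi].
    have -> : i = k by apply: val_inj; rewrite /= mi.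
    rewrite -/al [B j k]Bsym mulrA mulVf // mul1r subrr //.
  by rewrite (zB i j) // (zB i k) // mul0r mulr0 subrr.
have trE : \tr (B *m P) = \tr (B' *m P) + al^-1 * bf P a a.
  by rewrite -tr_rank1 -mxtraceZ -linearD /= scalemxAl -mulmxDl /B' subrK.
rewrite trE addr_ge0 //; first exact: IH.
by rewrite mulr_ge0 ?invr_ge0 //; apply: pP.
Qed.

Lemma bf1 p (x : 'cV[R]_p) : bf 1%:M x x = \sum_i x i 0 ^+ 2.
Proof. by rewrite /bf mulmx1 mxE; apply: eq_bigr => i _; rewrite mxE expr2. Qed.

Lemma bfs p (c : R) (x : 'cV[R]_p) : bf c%:M x x = c * \sum_i x i 0 ^+ 2.
Proof. by rewrite -bf1 -bfZm scalemx1. Qed.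

Lemma psd_add p (A B : 'M[R]_p) : psd A -> psd B -> psd (A + B).
Proof. by move=> hA hB x; rewrite -/(bf _ x x) bfDm addr_ge0 //; [apply: hA|apply: hB]. Qed.

Lemma psd_scale p (c : R) (A : 'M[R]_p) : 0 <= c -> psd A -> psd (c *: A).
Proof. by move=> c0 hA x; rewrite -/(bf _ x x) bfZm mulr_ge0 //; apply: hA. Qed.

Lemma psd_sum p n (c : 'I_n -> R) (A : 'I_n -> 'M[R]_p) :
  (forall i, 0 <= c i) -> (forall i, psd (A i)) -> psd (\sum_i c i *: A i).
Proof.
move=> c0 hA x; rewrite -/(bf _ x x) bf_summ sumr_ge0 // => i _.
by rewrite bfZm mulr_ge0 //; apply: hA.
Qed.

Lemma psd_scalar p (c : R) : 0 <= c -> psd (c%:M : 'M[R]_p).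
Proof.
move=> c0 x; rewrite -/(bf _ x x) bfs mulr_ge0 // sumr_ge0 // => i _.
exact: sqr_ge0.
Qed.

Lemma psd_congr p (X B : 'M[R]_p) : psd B -> psd (X^T *m B *m X).
Proof.
move=> hB x; have := hB (X *m x).
by rewrite trmx_mul !mulmxA.
Qed.

Lemma sym_congr p (X B : 'M[R]_p) : B^T = B -> (X^T *m B *m X)^T = X^T *m B *m X.
Proof. by move=> sB; rewrite !trmx_mul trmxK sB mulmxA. Qed.

Lemma sym_sum p n (c : 'I_n -> R) (A : 'I_n -> 'M[R]_p) :
  (forall i, (A i)^T = A i) -> (\sum_i c i *: A i)^T = \sum_i c i *: A i.
Proof.
move=> h; rewrite linear_sum; apply: eq_bigr => i _.
by rewrite linearZ /= h.
Qed.

Definition Mof n p (gamma : R) (S : 'I_n -> 'M[R]_p) (D : 'M[R]_n) : 'M[R]_p :=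
  n%:R^-1 *: (\sum_(i < n) D i i *: S i) + gamma%:M.

Lemma QgE n p (gamma : R) (S : 'I_n -> 'M[R]_p) (D : 'M[R]_n) :
  Qg gamma S D = invmx (Mof gamma S D).
Proof. by []. Qed.

Lemma Mof_sym n p (gamma : R) (S : 'I_n -> 'M[R]_p) D :
  (forall i, (S i)^T = S i) -> (Mof gamma S D)^T = Mof gamma S D.
Proof.
move=> sS; rewrite /Mof linearD linearZ /= sym_sum //.
by rewrite tr_scalar_mx.
Qed.

Lemma Mof_psd n p (gamma : R) (S : 'I_n -> 'M[R]_p) (D : 'M[R]_n) :
  (forall i, psd (S i)) -> (forall i, 0 <= D i i) ->
  psd (n%:R^-1 *: (\sum_(i < n) D i i *: S i)).
Proof.
move=> pS D0; apply: psd_scale; first by rewrite invr_ge0.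
exact: psd_sum.
Qed.

Lemma Mof_unit n p (gamma : R) (S : 'I_n -> 'M[R]_p) (D : 'M[R]_n) :
  0 < gamma -> (forall i, psd (S i)) -> (forall i, 0 <= D i i) ->
  Mof gamma S D \in unitmx.
Proof.
move=> g0 pS D0; rewrite -row_free_unit; apply: inj_row_free => v hv.
have h1 : bf (Mof gamma S D) v^T v^T = 0 by rewrite /bf trmxK hv mul0mx mxE.
move: h1; rewrite /Mof bfDm bfs => h1.
have hA := Mof_psd gamma pS D0 v^T.
have hs : \sum_i v^T i 0 ^+ 2 = 0.
  have hs0 : 0 <= \sum_i v^T i 0 ^+ 2 by apply: sumr_ge0 => i _; exact: sqr_ge0.
  move: hA; rewrite -/(bf _ _ _) => hA.
  have : gamma * \sum_i v^T i 0 ^+ 2 <= 0 by lra.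
  by rewrite pmulr_rle0 // => h2; apply/eqP; rewrite eq_le h2 hs0.
apply/matrixP => i0 j; rewrite (ord1 i0) mxE.
have := @psumr_eq0P _ _ _ (fun i => v^T i 0 ^+ 2) (fun i _ => sqr_ge0 _) hs j isT.
by rewrite mxE => /eqP; rewrite sqrf_eq0 => /eqP.
Qed.

Lemma trP_pos p (P : 'M[R]_p) : P^T = P -> psd P -> P != 0 -> 0 < \tr P.
Proof.
move=> sP pP Pn0.
have d0 i : 0 <= P i i by rewrite -bf_delta; apply: pP.
rewrite lt_def; apply/andP; split; last by rewrite /mxtrace sumr_ge0.
apply/negP => /eqP t0; move/negP: Pn0; apply; apply/eqP/matrixP => i j.
have hd k : P k k = 0.
  by have := @psumr_eq0P _ _ _ (fun i => P i i) (fun i _ => d0 i) t0 k isT.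
rewrite mxE; apply: sq_le0.
have := cs_bf (delta_mx i 0) (delta_mx j 0) sP pP.
by rewrite !bf_delta hd mul0r.
Qed.

Lemma trSQ_pos p (gamma : R) (M S0 : 'M[R]_p) : 0 < gamma ->
  M^T = M -> psd (M - gamma%:M) -> M \in unitmx ->
  S0^T = S0 -> psd S0 -> S0 != 0 -> 0 < \tr (S0 *m invmx M).
Proof.
move=> g0 sM pM uM sS pS Sn0.
set Q := invmx M.
have sQ : Q^T = Q by rewrite /Q trmx_inv sM.
set P := Q^T *m S0 *m Q.
have sP : P^T = P by apply: sym_congr.
have pP : psd P by apply: psd_congr.
have Pn0 : P != 0.
  apply: contraNneq Sn0 => P0.
  have : M^T *m P *m M = S0.
    by rewrite /P sQ sM /Q !mulmxA (mulmxV uM) mul1mx -mulmxA (mulVmx uM) mulmx1.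
  by rewrite P0 mulmx0 mul0mx => <-.
have e : \tr (S0 *m Q) = \tr ((M - gamma%:M) *m P) + gamma * \tr P.
  rewrite mulmxBl linearB /= mul_scalar_mx mxtraceZ subrK.
  by rewrite /P sQ /Q !mulmxA (mulmxV uM) mul1mx.
rewrite e; apply: ltr_wpDl.
  apply: tr_psd => //; rewrite linearB /= sM tr_scalar_mx //.
by rewrite mulr_gt0 // trP_pos.
Qed.

Lemma le_sqrt_of_sq (s P : R) : 0 <= P -> s ^+ 2 <= P -> s <= Num.sqrt P.
Proof.
move=> P0 h; apply: le_trans (ler_norm s) _.
by rewrite -sqrtr_sqr ler_sqrt.
Qed.

Lemma cs_sum n (u v : 'I_n -> R) : (forall j, 0 <= u j) -> (forall j, 0 <= v j) ->
  \sum_j Num.sqrt (u j) * Num.sqrt (v j) <=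
  Num.sqrt (\sum_j u j) * Num.sqrt (\sum_j v j).
Proof.
move=> u0 v0.
have U0 : 0 <= \sum_j u j by apply: sumr_ge0.
have V0 : 0 <= \sum_j v j by apply: sumr_ge0.
rewrite -sqrtrM //; apply: le_sqrt_of_sq; first exact: mulr_ge0.
apply: cs_quad => // t.
have -> : \sum_j u j + 2 * t * (\sum_j Num.sqrt (u j) * Num.sqrt (v j)) +
   t ^+ 2 * \sum_j v j = \sum_j (Num.sqrt (u j) + t * Num.sqrt (v j)) ^+ 2.
  rewrite mulr_sumr mulr_sumr -!big_split /=; apply: eq_bigr => j _.
  have e1 := sqr_sqrtr (u0 j); have e2 := sqr_sqrtr (v0 j).
  rewrite -[X in X + _ + _ = _]e1 -[X in _ + t ^+ 2 * X = _]e2; ring.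
by apply: sumr_ge0 => j _; exact: sqr_ge0.
Qed.

Lemma contr_real n (D D' G G' H : 'I_n -> R) (d kappa x x' : R) :
  (forall j, 0 < D j) -> (forall j, 0 < D' j) ->
  (forall j, 0 <= G j) -> (forall j, 0 <= G' j) ->
  (forall j, H j ^+ 2 <= G j * G' j) ->
  0 <= d -> (forall j, `|D j - D' j| <= d * Num.sqrt (D j * D' j)) ->
  0 <= kappa -> 0 <= x -> 0 <= x' ->
  \sum_j D j * G j <= kappa * x -> \sum_j D' j * G' j <= kappa * x' ->
  x - x' = \sum_j (D' j - D j) * H j ->
  `|x - x'| <= d * kappa * Num.sqrt (x * x').
Proof.
move=> D0 D'0 G0 G'0 HG d0 hD k0 x0 x'0 sG sG' ->.
apply: le_trans (ler_norm_sum _ _ _) _.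
have step j : `|(D' j - D j) * H j| <=
    d * (Num.sqrt (D j * G j) * Num.sqrt (D' j * G' j)).
  rewrite normrM distrC.
  have hH : `|H j| <= Num.sqrt (G j * G' j).
    by rewrite -sqrtr_sqr ler_sqrt ?mulr_ge0 // real_normK ?num_real.
  apply: le_trans (ler_pM _ _ (hD j) hH) _ => //.
  have Dj := ltW (D0 j); have D'j := ltW (D'0 j).
  rewrite -mulrA ler_wpM2l // -!sqrtrM ?mulr_ge0 //.
  by rewrite le_eqVlt; apply/orP; left; apply/eqP; congr Num.sqrt; ring.
apply: le_trans (ler_sum _ (fun j _ => step j)) _.
rewrite -mulr_sumr -mulrA ler_wpM2l //.
apply: le_trans (cs_sum _ _) _.
- by move=> j; apply: mulr_ge0; [exact: ltW|].
- by move=> j; apply: mulr_ge0; [exact: ltW|].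
have -> : kappa * Num.sqrt (x * x') = Num.sqrt (kappa * x) * Num.sqrt (kappa * x').
  rewrite -sqrtrM ?mulr_ge0 //.
  have -> : kappa * x * (kappa * x') = kappa ^+ 2 * (x * x') by ring.
  by rewrite (sqrtrM (x * x') (sqr_ge0 kappa)) sqrtr_sqr ger0_norm.
apply: ler_pM; rewrite ?sqrtr_ge0 // ler_sqrt ?mulr_ge0 //.
Qed.

Lemma tr_lin p n (A B : 'M[R]_p) (c : 'I_n -> R) (X : 'I_n -> 'M[R]_p) :
  \tr (A *m (\sum_j c j *: X j) *m B) = \sum_j c j * \tr (A *m X j *m B).
Proof.
rewrite mulmx_sumr mulmx_suml linear_sum; apply: eq_bigr => j _ /=.
by rewrite -scalemxAr -scalemxAl mxtraceZ.
Qed.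

Definition Phi p (A B X Y : 'M[R]_p) := \tr (A *m X *m B *m Y).

Lemma Phi_ge0 p (A B X : 'M[R]_p) : A^T = A -> psd A -> psd B -> X^T = X ->
  0 <= Phi A B X X.
Proof.
move=> sA pA pB sX; have := tr_psd sA pA (psd_congr X pB).
by rewrite sX !mulmxA.
Qed.

Lemma Phi_sym p (A B X Y : 'M[R]_p) : A^T = A -> B^T = B -> X^T = X -> Y^T = Y ->
  Phi A B Y X = Phi A B X Y.
Proof.
move=> sA sB sX sY; rewrite /Phi -[LHS]mxtrace_tr !trmx_mul sA sB sX sY.
by rewrite !mulmxA [LHS]mxtrace_mulC !mulmxA.
Qed.

Lemma Phi_quad p (A B X Y : 'M[R]_p) t :
  Phi A B (X + t *: Y) (X + t *: Y) =
  Phi A B X X + t * (Phi A B X Y + Phi A B Y X) + t ^+ 2 * Phi A B Y Y.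
Proof.
have sAl m1 m2 m3 (a : R) (U : 'M[R]_(m1, m2)) (V : 'M[R]_(m2, m3)) :
  (a *: U) *m V = a *: (U *m V) by rewrite scalemxAl.
have sAr m1 m2 m3 (a : R) (U : 'M[R]_(m1, m2)) (V : 'M[R]_(m2, m3)) :
  U *m (a *: V) = a *: (U *m V) by rewrite scalemxAr.
rewrite /Phi !(mulmxDl, mulmxDr) !(sAr, sAl) !scalerA !linearD /= !mxtraceZ.
ring.
Qed.

Lemma Phi_cs p (A B X Y : 'M[R]_p) : A^T = A -> psd A -> B^T = B -> psd B ->
  X^T = X -> Y^T = Y -> Phi A B X Y ^+ 2 <= Phi A B X X * Phi A B Y Y.
Proof.
move=> sA pA sB pB sX sY; apply: cs_quad; first exact: Phi_ge0.
move=> t; have := @Phi_ge0 _ A B (X + t *: Y) sA pA pB.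
rewrite Phi_quad (@Phi_sym _ A B X Y sA sB sX sY) => h.
have : 0 <= Phi A B X X + t * (Phi A B X Y + Phi A B X Y) + t ^+ 2 * Phi A B Y Y.
  apply: h; by rewrite linearD linearZ /= sX sY.
by have -> : t * (Phi A B X Y + Phi A B X Y) = 2 * t * Phi A B X Y by ring.
Qed.

Lemma Mof_sub n p (gamma : R) (S : 'I_n -> 'M[R]_p) D :
  Mof gamma S D - gamma%:M = n%:R^-1 *: (\sum_(j < n) D j j *: S j).
Proof. by rewrite /Mof addrK. Qed.

Lemma Mof_diff n p (gamma : R) (S : 'I_n -> 'M[R]_p) D D' :
  Mof gamma S D' - Mof gamma S D =
  n%:R^-1 *: (\sum_(j < n) (D' j j - D j j) *: S j).
Proof.
rewrite /Mof opprD addrACA subrr addr0 -scalerBr -sumrB.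
by congr (_ *: _); apply: eq_bigr => j _; rewrite scalerBl.
Qed.

Lemma IS_coord n p (gamma : R) (S : 'I_n -> 'M[R]_p) (D D' : 'M[R]_n) (c d : R) i :
  0 < gamma -> (forall j, (S j)^T = S j) -> (forall j, psd (S j)) ->
  (forall j, 0 < D j j) -> (forall j, 0 < D' j j) ->
  0 <= c -> gamma * c <= 1 ->
  psd (1%:M - c *: Mof gamma S D) -> psd (1%:M - c *: Mof gamma S D') ->
  0 <= d -> (forall j, `|D j j - D' j j| <= d * Num.sqrt (D j j * D' j j)) ->
  0 <= n%:R^-1 * \tr (S i *m Qg gamma S D) ->
  0 <= n%:R^-1 * \tr (S i *m Qg gamma S D') ->
  `|n%:R^-1 * \tr (S i *m Qg gamma S D) - n%:R^-1 * \tr (S i *m Qg gamma S D')|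
   <= d * (1 - gamma * c) * Num.sqrt (n%:R^-1 * \tr (S i *m Qg gamma S D) *
                                      (n%:R^-1 * \tr (S i *m Qg gamma S D'))).
Proof.
move=> g0 sS pS D0 D'0 c0 gc pc pc' d0 hd x0 x'0.
set w := n%:R^-1.
have w0 : 0 <= w by rewrite invr_ge0.
have D0' j : 0 <= D j j by exact: ltW.
have D'0' j : 0 <= D' j j by exact: ltW.
set M := Mof gamma S D; set M' := Mof gamma S D'.
have uM : M \in unitmx by apply: Mof_unit.
have uM' : M' \in unitmx by apply: Mof_unit.
rewrite !QgE -/M -/M'.
set Q := invmx M; set Q' := invmx M'.
have sM : M^T = M by apply: Mof_sym.
have sM' : M'^T = M' by apply: Mof_sym.
have sQ : Q^T = Q by rewrite /Q trmx_inv sM.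
have sQ' : Q'^T = Q' by rewrite /Q' trmx_inv sM'.
have QM : Q *m M = 1%:M by rewrite /Q mulVmx.
have MQ : M *m Q = 1%:M by rewrite /Q mulmxV.
have Q'M' : Q' *m M' = 1%:M by rewrite /Q' mulVmx.
have M'Q' : M' *m Q' = 1%:M by rewrite /Q' mulmxV.
pose G j := w * w * Phi (S i) (S j) Q Q.
pose G' j := w * w * Phi (S i) (S j) Q' Q'.
pose H j := w * w * Phi (S i) (S j) Q Q'.
have kap (N Qn : 'M[R]_p) (E : 'M[R]_n) : N = Mof gamma S E -> Qn = invmx N ->
    N \in unitmx -> Qn^T = Qn -> (forall j, 0 <= E j j) ->
    psd (1%:M - c *: N) ->
    \sum_j E j j * (w * w * Phi (S i) (S j) Qn Qn) <=
    (1 - gamma * c) * (w * \tr (S i *m Qn)).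
  move=> NE QnE uN sQn E0 pN.
  have QN : Qn *m N = 1%:M by rewrite QnE mulVmx.
  have e1 : \sum_j E j j * (w * w * Phi (S i) (S j) Qn Qn) =
      w * \tr (S i *m Qn *m (N - gamma%:M) *m Qn).
    rewrite NE Mof_sub -scalemxAr -scalemxAl mxtraceZ tr_lin.
    rewrite !mulr_sumr; apply: eq_bigr => j _; rewrite /Phi /w; ring.
  have e2 : \tr (S i *m Qn *m (N - gamma%:M) *m Qn) =
      \tr (S i *m Qn) - gamma * \tr (S i *m Qn *m Qn).
    have NQ : N *m Qn = 1%:M by rewrite QnE mulmxV.
    by rewrite mulmxBr mulmxBl linearB /= -!mulmxA NQ mulmx1 mul_scalar_mx -!scalemxAr mxtraceZ.
  have e3 : c * \tr (S i *m Qn) <= \tr (S i *m Qn *m Qn).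
    have := tr_psd (sS i) (pS i) (psd_congr Qn pN).
    rewrite sQn mulmxBr mulmxBl mulmx1 -scalemxAr -scalemxAl QN mul1mx mulmxBr -scalemxAr linearB /= mxtraceZ !mulmxA.
    by rewrite subr_ge0.
  rewrite e1 e2 -subr_ge0.
  have -> : (1 - gamma * c) * (w * \tr (S i *m Qn)) -
      w * (\tr (S i *m Qn) - gamma * \tr (S i *m Qn *m Qn)) =
      w * gamma * (\tr (S i *m Qn *m Qn) - c * \tr (S i *m Qn)) by ring.
  by rewrite !mulr_ge0 ?subr_ge0 // ltW.
have Phi0 j (X : 'M[R]_p) : X^T = X -> 0 <= Phi (S i) (S j) X X.
  by move=> sX; apply: Phi_ge0.
have ww : 0 <= w * w by rewrite mulr_ge0.
apply: (@contr_real n (fun j => D j j) (fun j => D' j j) G G' H d (1 - gamma * c)) => //.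
- by move=> j; rewrite /G mulr_ge0 // Phi0.
- by move=> j; rewrite /G' mulr_ge0 // Phi0.
- move=> j; rewrite /H /G /G'.
  have h := @Phi_cs _ (S i) (S j) Q Q' (sS i) (pS i) (sS j) (pS j) sQ sQ'.
  rewrite exprMn; have -> : w * w * Phi (S i) (S j) Q Q * (w * w * Phi (S i) (S j) Q' Q') =
     (w * w) ^+ 2 * (Phi (S i) (S j) Q Q * Phi (S i) (S j) Q' Q') by ring.
  by rewrite ler_wpM2l // exprn_ge0.
- by rewrite subr_ge0.
- exact: (kap M Q D).
- exact: (kap M' Q' D').
have eQ : Q - Q' = Q *m (M' - M) *m Q'.
  by rewrite mulmxBr mulmxBl -!mulmxA M'Q' mulmx1 mulmxA QM mul1mx.
rewrite -mulrBr -linearB /= -mulmxBr eQ Mof_diff !mulmxA -scalemxAr -scalemxAl mxtraceZ.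
rewrite -!mulmxA [S i *m _]mulmxA [S i *m Q *m _]mulmxA tr_lin !mulr_sumr.
by apply: eq_bigr => j _; rewrite /H /Phi /w; ring.
Qed.

End Mat.

Section Fin.
Variable R : realType.

Lemma IS_ii n p (gamma : R) (S : 'I_n -> 'M[R]_p) D i :
  IS gamma S D i i = n%:R^-1 * \tr (S i *m Qg gamma S D).
Proof. by rewrite /IS mxE eqxx mulr1n mxE. Qed.

Lemma IS_pos n p (gamma : R) (S : 'I_n -> 'M[R]_p) (D : 'M[R]_n) i :
  0 < gamma -> (forall i, (S i)^T = S i) -> (forall i, psd (S i)) ->
  (forall i, S i != 0) -> (forall j, 0 <= D j j) ->
  0 < n%:R^-1 * \tr (S i *m Qg gamma S D).
Proof.
move=> g0 sS pS nS D0.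
have n0 : (0 < n)%N := leq_ltn_trans (leq0n i) (ltn_ord i).
rewrite mulr_gt0 ?invr_gt0 ?ltr0n //.
rewrite QgE; apply: (trSQ_pos g0) => //.
- exact: Mof_sym.
- by rewrite Mof_sub; apply: Mof_psd.
- exact: Mof_unit.
Qed.

Lemma Dpos_IS n p (gamma : R) (S : 'I_n -> 'M[R]_p) (D : 'M[R]_n) :
  0 < gamma -> (forall i, (S i)^T = S i) -> (forall i, psd (S i)) ->
  (forall i, S i != 0) -> Dpos D -> Dpos (IS gamma S D).
Proof.
move=> g0 sS pS nS /DposP [_ D0].
apply: Dpos_diag => i; apply: IS_pos => // j; exact: ltW.
Qed.

Lemma IS_contr n p (gamma : R) (S : 'I_n -> 'M[R]_p) (D D' : 'M[R]_n) (c : R) :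
  0 < gamma -> (forall i, (S i)^T = S i) -> (forall i, psd (S i)) ->
  (forall i, S i != 0) -> Dpos D -> Dpos D' ->
  0 <= c -> gamma * c <= 1 ->
  psd (1%:M - c *: Mof gamma S D) -> psd (1%:M - c *: Mof gamma S D') ->
  ds (IS gamma S D) (IS gamma S D') <= (1 - gamma * c) * ds D D'.
Proof.
move=> g0 sS pS nS /DposP [_ D0] /DposP [_ D'0] c0 gc pc pc'.
apply: ds_le; first by rewrite mulr_ge0 ?subr_ge0 ?ds_ge0.
move=> i; rewrite !IS_ii.
have x0 := IS_pos i g0 sS pS nS (fun j => ltW (D0 j)).
have x'0 := IS_pos i g0 sS pS nS (fun j => ltW (D'0 j)).
apply: rho_leP => //.
rewrite [_ * ds D D']mulrC.
apply: IS_coord => //; try exact: ds_ge0; try exact: ltW.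
move=> j; apply: rho_le => //; exact: ds_ge.
Qed.

Lemma bf_le p (A : 'M[R]_p) x :
  bf A x x <= (\sum_j \sum_i `|A i j|) * \sum_k x k 0 ^+ 2.
Proof.
set s := \sum_k x k 0 ^+ 2.
have xs k : x k 0 ^+ 2 <= s.
  rewrite /s (bigD1 k) //= lerDl; apply: sumr_ge0 => *; exact: sqr_ge0.
have nx k : `|x k 0| ^+ 2 = x k 0 ^+ 2 by rewrite -normrX ger0_norm // sqr_ge0.
rewrite /bf mxE mulr_suml; apply: ler_sum => j _.
rewrite mxE mulr_suml mulr_suml; apply: ler_sum => i _.
rewrite mxE.
apply: le_trans (ler_norm _) _.
rewrite !normrM.
have hi := xs i; have hj := xs j; rewrite -nx in hi; rewrite -nx in hj.
have ai := normr_ge0 (x i 0); have aj := normr_ge0 (x j 0).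
have hA := normr_ge0 (A i j).
have : `|x i 0| * `|x j 0| <= s by nra.
nra.
Qed.

End Fin.

Theorem corollary2 (R : realType) (n p : nat) (gamma : R)
    (S : 'I_n -> 'M[R]_p) (f : 'M[R]_n -> 'M[R]_n) (lamf : R) :
  0 < gamma ->
  (forall i, (S i)^T = S i) ->
  (forall i, psd (S i)) ->
  (forall i, S i != 0) ->
  (forall D, Dpos D -> Dpos (f D)) ->
  0 <= lamf -> lamf <= 1 ->
  (forall D D', Dpos D -> Dpos D' -> ds (f D) (f D') <= lamf * ds D D') ->
  ((exists f0 : 'M[R]_n, Dpos f0 /\
      forall D, Dpos D -> forall i, f D i i <= f0 i i) \/ lamf < 1) ->
  exists! D : 'M[R]_n, Dpos D /\ D = IS gamma S (f D).
Proof.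
move=> g0 sS pS nS fD l0 l1 fL hcase.
have FD D : Dpos D -> Dpos (IS gamma S (f D)).
  by move=> hD; apply: Dpos_IS => //; exact: fD.
suff [c [c0 [gc [gc1 pc]]]] : exists c : R, [/\ 0 <= c, gamma * c <= 1,
    (1 - gamma * c) * lamf < 1 &
    forall D, Dpos D -> psd (1%:M - c *: Mof gamma S (f D))].
  apply: (@fixpoint_unique _ n (fun D => IS gamma S (f D)) ((1 - gamma * c) * lamf)) => //.
  - by rewrite mulr_ge0 // subr_ge0.
  - move=> D D' hD hD'.
    apply: le_trans (IS_contr g0 sS pS nS (fD _ hD) (fD _ hD') c0 gc (pc _ hD) (pc _ hD')) _.
    by rewrite -mulrA ler_wpM2l ?subr_ge0 // fL.
case: hcase => [[f0 [f0p f0b]]|lt1].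
  set A := Mof gamma S f0.
  set K := \sum_j \sum_i `|A i j| + gamma.
  have K0 : gamma <= K.
    by rewrite /K lerDr; apply: sumr_ge0 => j _; apply: sumr_ge0 => i _.
  have Kp : 0 < K by apply: lt_le_trans K0.
  have gc1 : gamma * K^-1 <= 1 by rewrite mulrC ler_pdivrMl // mulr1.
  have gc0 : 0 < gamma * K^-1 by rewrite mulr_gt0 ?invr_gt0.
  exists K^-1; split.
  - by rewrite invr_ge0 ltW.
  - exact: gc1.
  - apply: le_lt_trans (_ : 1 - gamma * K^-1 < 1); last by rewrite ltrBlDr ltrDl.
    by rewrite ler_piMr // subr_ge0.
  move=> D hD x; rewrite -/(bf _ x x) bfBm bfZm bf1.
  set s := \sum_k x k 0 ^+ 2.
  have s0 : 0 <= s by apply: sumr_ge0 => *; exact: sqr_ge0.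
  have h1 : bf (Mof gamma S (f D)) x x <= bf A x x.
    rewrite -subr_ge0 -bfBm /A Mof_diff.
    apply: psd_scale; first by rewrite invr_ge0.
    apply: psd_sum => // j; rewrite subr_ge0; exact: f0b.
  have h2 : bf A x x <= K * s.
    apply: le_trans (bf_le A x) _; rewrite ler_wpM2r // /K lerDl ltW //.
  rewrite subr_ge0.
  have : K^-1 * bf (Mof gamma S (f D)) x x <= K^-1 * (K * s).
    apply: ler_wpM2l; [rewrite invr_ge0; exact: ltW | exact: le_trans h1 h2].
  by rewrite mulrA mulVf ?mul1r // gt_eqF.
exists 0; split => //.
- by rewrite mulr0 ler01.
- by rewrite mulr0 subr0 mul1r.
- by move=> D _; rewrite scale0r subr0; apply: psd_scalar; exact: ler01.
Qed.
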